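(* For every integer $k\ge 5$, the adjacency matrix of the graph $W(k)$ has exactly $k-1$ nonpositive eigenvalues (counted with multiplicity).
   Context: All graphs are finite, simple and undirected. For an integer $k\ge 2$, the graph $W(k)$ on $k+\binom{k}{2}=\binom{k+1}{2}$ vertices is defined as follows. Its vertex set is $\{a_1,\dots,a_k\}\cup\{b_S : S\subseteq\{1,\dots,k\},\ |S|=2\}$. The vertices $a_1,\dots,a_k$ are pairwise adjacent (forming a complete graph $K_k$). Two vertices $b_S,b_T$ are adjacent iff $S\cap T=\emptyset$ (so these vertices form the Kneser graph $Kneser(k,2)$). A vertex $a_i$ is adjacent to $b_S$ iff $i\in S$. *)

(* Defs.v *)
From HB Require Import structures.
From mathcomp Require Import all_boot all_order all_algebra all_field.
Set Implicit Arguments. Unset Strict Implicit. Unset Printing Implicit Defensive.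
Import Order.TTheory GRing.Theory Num.Theory.
Local Open Scope ring_scope.

(* Vertices of W(k): the a_i (i in 'I_k) and the b_S (S a 2-subset of 'I_k). *)
Definition Wvert (k : nat) : finType :=
  ('I_k + {S : {set 'I_k} | #|S| == 2%N})%type.

Definition W_adj (k : nat) (u v : Wvert k) : bool :=
  match u, v with
  | inl i, inl j => i != j
  | inl i, inr A => i \in val A
  | inr A, inl i => i \in val A
  | inr A, inr B => [disjoint val A & val B]
  end.

Definition W_adjmx (k : nat) : 'M[algC]_#|Wvert k| :=
  \matrix_(i, j) (W_adj (enum_val i) (enum_val j))%:R.

(* Main.v *)
Require Import Defs.
From HB Require Import structures.
From mathcomp Require Import all_boot all_order all_algebra all_field.
From mathcomp Require Import zify ring lra.
Import Order.TTheory GRing.Theory Num.Theory.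
Set Implicit Arguments. Unset Strict Implicit. Unset Printing Implicit Defensive.

Section Comb.
Variable T : finType.

Lemma set2_inj (i : T) : injective (fun x : T => [set i; x]).
Proof.
move=> x y /setP Hxy.
have := Hxy y; rewrite !inE eqxx orbT => /orP [/eqP yi|/eqP -> //].
have := Hxy x; rewrite !inE eqxx orbT yi => /esym /orP [/eqP -> //|/eqP //].
Qed.

Lemma card2_in (i : T) (X : {set T}) : i \notin X ->
  #|[pred S : {set T} | (#|S| == 2) && (i \in S) && (S \subset i |: X)]| = #|X|.
Proof.
move=> iX; rewrite -(card_imset (mem X) (@set2_inj i)).
apply: eq_card => S; rewrite !inE.
apply/idP/imsetP.
  move=> /andP [/andP [/cards2P [a [b [ab ->]]] iS] Ssub].
  have Hab : forall x, x \in [set a; b] -> x != i -> x \in X.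
    move=> x xS xi; have := subsetP Ssub x xS; rewrite in_setU1.
    by rewrite (negbTE xi).
  move: iS; rewrite !inE => /orP [/eqP ia|/eqP ib].
    exists b; last by rewrite ia.
    apply: Hab; first by rewrite !inE eqxx orbT.
    by rewrite ia eq_sym.
  exists a; last by rewrite ib setUC.
  apply: Hab; first by rewrite !inE eqxx.
  by rewrite ib.
move=> [x xX ->].
have xi : i != x by apply: contraNneq iX => ->.
rewrite cards2 xi !inE eqxx /=.
by apply/subsetP => y; rewrite !inE => /orP [->|/eqP ->]; rewrite ?xX ?orbT.
Qed.

Lemma cardS_i (i : T) :
  #|[pred S : {set T} | (#|S| == 2) && (i \in S)]| = #|T|.-1.
Proof.
rewrite -(cardsC1 i) -(@card2_in i [set~ i]); last by rewrite !inE eqxx.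
apply: eq_card => S; rewrite !inE.
have -> : i |: [set~ i] = setT.
  by apply/setP => y; rewrite !inE; case: (y == i).
by rewrite subsetT andbT.
Qed.

Lemma cardS_ij (i j : T) : i != j ->
  #|[pred S : {set T} | (#|S| == 2) && (i \in S) && (j \in S)]| = 1.
Proof.
move=> ij; apply: (@eq_card1 _ [set i; j]) => S; rewrite !inE.
apply/idP/eqP.
  move=> /andP [/andP [S2 iS] jS]; apply/eqP; rewrite eq_sym eqEcard.
  rewrite cards2 ij (eqP S2) leqnn andbT.
  by apply/subsetP => y; rewrite !inE => /orP [/eqP ->|/eqP ->].
by move=> ->; rewrite cards2 ij !inE !eqxx orbT.
Qed.

Lemma cardS_i_disj (i : T) (U : {set T}) : i \notin U ->
  #|[pred S : {set T} | (#|S| == 2) && (i \in S) && [disjoint S & U]]|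
   = #|~: (i |: U)|.
Proof.
move=> iU; rewrite -(@card2_in i); last by rewrite !inE eqxx.
apply: eq_card => S; rewrite !inE disjoints_subset.
have -> : i |: ~: (i |: U) = ~: U.
  apply/setP => y; rewrite !inE.
  by case: (eqVneq y i) => [->|]; rewrite ?iU.
by [].
Qed.

Lemma cardS_disj (U : {set T}) :
  #|[pred S : {set T} | (#|S| == 2) && [disjoint S & U]]| = 'C(#|~: U|, 2).
Proof.
rewrite -cards_draws; apply: eq_card => S; rewrite !inE disjoints_subset.
by rewrite andbC.
Qed.

End Comb.

Lemma bin2_2 n : (2 * 'C(n, 2) = n * n.-1)%N.
Proof.
elim: n => [//|n IH]; rewrite binS bin1 mulnDr IH.
by case: n {IH} => [//|n] /=; rewrite mulnC; lia.
Qed.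

Local Open Scope ring_scope.

Section Gen.
Variable n : nat.
Implicit Types (P D A : 'M[algC]_n).

Lemma char_poly_conj P D : P \in unitmx ->
  char_poly (invmx P *m D *m P) = char_poly D.
Proof.
move=> Pu; rewrite /char_poly.
have -> : char_poly_mx (invmx P *m D *m P) =
   map_mx polyC (invmx P) *m char_poly_mx D *m map_mx polyC P.
  rewrite /char_poly_mx mulmxBr mulmxBl -!map_mxM.
  congr (_ - _).
  rewrite mul_mx_scalar -scalemxAl -map_mxM mulVmx // map_mx1 scalemx1 //.
rewrite !det_mulmx mulrC mulrA -det_mulmx -map_mxM mulmxV // map_mx1 det1 mul1r.
by [].
Qed.

Lemma diag_char_poly (d : 'rV[algC]_n) :
  char_poly (diag_mx d) = \prod_(x <- [seq d 0 i | i <- enum 'I_n]) ('X - x%:P).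
Proof.
rewrite char_poly_trig ?diag_mx_is_trig // big_map big_enum /=.
by apply: eq_bigr => i _; rewrite mxE eqxx mulr1n.
Qed.

Lemma eig_rank_le P (d : 'rV[algC]_n) a : P \in unitmx ->
  (\rank (eigenspace (invmx P *m diag_mx d *m P) a) <= #|[pred i : 'I_n | d ord0 i == a]|)%N.
Proof.
move=> Pu.
set A := invmx P *m diag_mx d *m P; set E := eigenspace A a.
have -> : \rank E = \rank (E *m invmx P).
  by rewrite mxrankMfree // row_free_unit unitmx_inv.
set S := [pred i : 'I_n | d ord0 i == a].
pose Sel : 'M[algC]_(#|S|, n) := \matrix_(j, i) (i == enum_val j)%:R.
apply: leq_trans (rank_leq_row Sel).
apply: mxrankS.
apply/row_subP => i; set w := row i (E *m invmx P).
have hw : w *m diag_mx d = a *: w.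
  have : row i E *m A = a *: row i E by apply/eigenspaceP; exact: row_sub.
  rewrite /w row_mul => /(congr1 (mulmx^~ (invmx P))).
  by rewrite /A !mulmxA mulmxK // -scalemxAl.
have hw0 j : d 0 j != a -> w 0 j = 0.
  move=> dj; have /rowP /(_ j) := hw; rewrite mul_mx_diag !mxE => /eqP.
  rewrite mulrC -subr_eq0 -mulrBl mulf_eq0 subr_eq0 (negbTE dj) /=.
  by move/eqP.
apply/submxP; exists (\row_j w 0 (enum_val j)).
apply/rowP => j; rewrite [X in _ = X]mxE.
under eq_bigr => x _ do rewrite [Sel _ _]mxE [(\row__ _) _ _]mxE.
rewrite -(big_enum_val (A := S) (fun x => w 0 x * (j == x)%:R)) /=.
case: (boolP (j \in S)) => jS.
  rewrite (bigD1 j) //= eqxx mulr1 big1 ?addr0 // => x /andP [_ xj].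
  by rewrite eq_sym (negbTE xj) mulr0.
rewrite big1 ?hw0 // => x xS.
have -> : (j == x) = false by apply/negP => /eqP jx; move: jS; rewrite jx xS.
by rewrite mulr0.
Qed.
End Gen.
Lemma count_enum_ord n (P : pred 'I_n) : count P (enum 'I_n) = #|P|.
Proof.
rewrite -size_filter cardE /enum_mem /= -filter_predI.
by congr size; apply: eq_filter => x; rewrite /= andbT.
Qed.

Lemma sum_card_distinct n (f : 'I_n -> algC) (rs : seq algC) : uniq rs ->
  (\sum_(r <- rs) #|[pred i | f i == r]|)%N = #|[pred i | f i \in rs]|.
Proof.
elim: rs => [|a rs IH] /=.
  by move=> _; rewrite big_nil; apply/esym/eq_card0 => i; rewrite !inE.
move=> /andP [ars urs]; rewrite big_cons IH //.
rewrite -(cardUI [pred i | f i == a] [pred i | f i \in rs]).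
rewrite [#|[predI _ & _]|]eq_card0 ?addn0.
  by apply: eq_card => i; rewrite !inE.
move=> i; rewrite !inE; apply/negP => /andP [/eqP -> ain].
by rewrite ain in ars.
Qed.

Lemma le_sum_eq (I : eqType) (rs : seq I) (c L : I -> nat) :
  (forall r, r \in rs -> L r <= c r)%N ->
  (\sum_(r <- rs) c r <= \sum_(r <- rs) L r)%N ->
  forall r, r \in rs -> c r = L r.
Proof.
elim: rs => [|a rs IH] //= H; rewrite !big_cons => Hs r.
have Ha : (L a <= c a)%N by apply: H; rewrite inE eqxx.
have Hrs : forall r, r \in rs -> (L r <= c r)%N.
  by move=> x xr; apply: H; rewrite inE xr orbT.
have Hsum : (\sum_(r <- rs) L r <= \sum_(r <- rs) c r)%N.
  by rewrite big_seq_cond [X in (_ <= X)%N]big_seq_cond; apply: leq_sum => x /andP [/Hrs].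
have Ea : c a = L a.
  apply/eqP; rewrite eqn_leq Ha andbT.
  by rewrite -(leq_add2r (\sum_(r <- rs) c r)); apply: leq_trans Hs _; rewrite leq_add2l.
rewrite inE => /orP [/eqP -> //|rrs].
apply: IH => //; rewrite Ea leq_add2l in Hs; exact: Hs.
Qed.

Lemma spectral_count n (A : 'M[algC]_n) (rs : seq algC) (L : algC -> nat) :
  A \is hermsymmx -> uniq rs ->
  (forall r, r \in rs -> (L r <= \rank (eigenspace A r))%N) ->
  (\sum_(r <- rs) L r)%N = n ->
  exists s : seq algC, char_poly A = \prod_(x <- s) ('X - x%:P) /\
     (forall x, x \in s -> x \in rs) /\
     (forall r, r \in rs -> count (pred1 r) s = L r).
Proof.
move=> Ah urs HL Hn.
have /orthomx_spectralP Aeq := hermitian_normalmx Ah.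
set P := spectralmx A in Aeq; set d := spectral_diag A in Aeq.
have Pu : P \in unitmx by apply: spectral_unit.
pose c r := #|[pred i : 'I_n | d ord0 i == r]|.
have Hc : forall r, r \in rs -> (L r <= c r)%N.
  move=> r rr; apply: leq_trans (HL r rr) _; rewrite [in X in eigenspace X]Aeq.
  exact: eig_rank_le.
have Hsum : (\sum_(r <- rs) c r <= \sum_(r <- rs) L r)%N.
  by rewrite Hn sum_card_distinct //; apply: leq_trans (max_card _) _; rewrite card_ord.
have Ec := le_sum_eq Hc Hsum.
have Hall : forall i, d ord0 i \in rs.
  have Hs : (\sum_(r <- rs) c r)%N = n.
    by rewrite -Hn; apply: eq_big_seq => r rr; apply: Ec.
  rewrite /c sum_card_distinct // in Hs.
  have := cardC [pred i : 'I_n | d ord0 i \in rs]; rewrite Hs card_ord.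
  move=> /eqP; rewrite -[X in (_ == X)%N]addn0 eqn_add2l => /eqP /card0_eq H0 i.
  by apply/negPn/negP => Hi; have := H0 i; rewrite !inE Hi.
exists [seq d ord0 i | i <- enum 'I_n]; split; last split.
- by rewrite [in LHS]Aeq char_poly_conj // diag_char_poly.
- by move=> x /mapP [i _ ->].
- move=> r rr; rewrite count_map count_enum_ord -(Ec r rr).
  by apply: eq_card => i.
Qed.

Lemma eig_real n (A : 'M[algC]_n) r : A \is hermsymmx ->
  (0 < \rank (eigenspace A r))%N -> r \is Num.real.
Proof.
move=> Ah Hr.
have /orthomx_spectralP Aeq := hermitian_normalmx Ah.
have Hre := hermitian_spectral_diag_real Ah.
set P := spectralmx A in Aeq Hre; set d := spectral_diag A in Aeq Hre.
have Pu : P \in unitmx by apply: spectral_unit.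
have : (0 < #|[pred i : 'I_n | d ord0 i == r]|)%N.
  apply: leq_trans Hr _; rewrite [in X in eigenspace X]Aeq; exact: eig_rank_le.
case/card_gt0P => i; rewrite inE => /eqP <-.
by move/mxOverP: Hre; apply.
Qed.

Lemma sum_delta (I : finType) (t : I) (F : I -> algC) :
  \sum_(x : I) (x == t)%:R * F x = F t.
Proof.
rewrite (bigD1 t) //= eqxx mul1r big1 ?addr0 // => x /negbTE ->.
by rewrite mul0r.
Qed.

Lemma sum_ind (I : finType) (P : pred I) :
  \sum_(x : I) (P x)%:R = #|P|%:R :> algC.
Proof.
rewrite (bigID P) /= [X in _ + X]big1 ?addr0; last by move=> x /negbTE ->.
rewrite (eq_bigr (fun _ => 1)); last by move=> x ->.
by rewrite sumr_const.
Qed.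

Lemma indM (a b : bool) : (a%:R * b%:R : algC) = (a && b)%:R.
Proof. by case: a; case: b; rewrite ?mul1r ?mul0r. Qed.

Section W.
Variable t : nat.
Local Notation k := t.+3.
Local Notation T := (Wvert k).
Local Notation A := (W_adjmx k).
Local Notation Bt := ({S : {set 'I_k} | #|S| == 2%N} : finType).

Definition mxW p (g : 'I_p -> T -> algC) : 'M[algC]_(p, #|T|) :=
  \matrix_(r, j) g r (enum_val j).

Lemma sum_enumT (F : T -> algC) :
  \sum_(j < #|T|) F (enum_val j) = \sum_(x : T) F x.
Proof. by rewrite -(big_enum_val (A := T)). Qed.

Lemma mxW_mulA (p : nat) (g : 'I_p -> T -> algC) :
  mxW g *m A = mxW (fun r y => \sum_(x : T) g r x * (W_adj x y)%:R).
Proof.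
apply/matrixP => r j; rewrite !mxE -sum_enumT.
by apply: eq_bigr => i _; rewrite !mxE.
Qed.

Lemma sumW (F : T -> algC) :
  \sum_(x : T) F x = \sum_(i : 'I_k) F (inl i) + \sum_(S : Bt) F (inr S).
Proof. exact: big_sumType. Qed.


Lemma W_adj_sym (u v : T) : W_adj u v = W_adj v u.
Proof.
case: u => [i|S]; case: v => [j|S']; rewrite /W_adj //.
  by rewrite eq_sym.
by rewrite disjoint_sym.
Qed.

Lemma A_herm : A \is hermsymmx.
Proof.
rewrite qualifE expr0 scale1r; apply/eqP/matrixP => i j.
by rewrite !mxE conjC_nat W_adj_sym.
Qed.


Lemma disj_formula (S U : {set 'I_k}) : #|S| = 2%N -> #|U| = 2%N ->
  ([disjoint S & U]%:R : algC) = (U == S)%:R + 1 - #|S :&: U|%:R.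
Proof.
move=> S2 U2.
have [->|US] := eqVneq U S.
  rewrite setIid S2 -setI_eq0 setIid.
  have -> : (S == set0) = false by apply/negP => /eqP S0; rewrite S0 cards0 in S2.
  by rewrite /=; ring.
case: (boolP [disjoint S & U]) => dSU.
  by rewrite (disjoint_setI0 dSU) cards0 /=; ring.
have H1 : #|S :&: U| = 1%N.
  have : (0 < #|S :&: U|)%N.
    rewrite card_gt0; apply: contraNneq dSU => H0; by rewrite -setI_eq0 H0.
  have : (#|S :&: U| < 2)%N.
    rewrite ltn_neqAle -{2}S2 subset_leq_card ?subsetIl // andbT.
    apply: contraNneq US => H2.
    have ES : S :&: U = S by apply/eqP; rewrite eqEcard subsetIl H2 S2.
    have EU : S :&: U = U by apply/eqP; rewrite eqEcard subsetIr H2 U2.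
    by rewrite -EU ES.
  by case: #|S :&: U| => [|[|]].
by rewrite H1 /=; ring.
Qed.


Definition evB (s : 'I_#|Bt|) : Bt := enum_val s.
Definition Nt : 'M[algC]_(#|Bt|, k) := \matrix_(s, i) (i \in val (evB s))%:R.
Definition Emb1 := mxW (fun (s : 'I_#|Bt|) (y : T) => (y == inr (evB s))%:R).
Definition Z1 := mxW (fun (i : 'I_k) (y : T) =>
   match y with inl j => (i == j)%:R | inr U => 2^-1 - (i \in val U)%:R end).

Lemma Emb1_A : Emb1 *m A = Emb1 + Nt *m Z1.
Proof.
rewrite /Emb1 mxW_mulA; apply/matrixP => s j; rewrite !mxE.
rewrite sum_delta /Nt /Z1 /mxW.
under [X in _ = _ + X]eq_bigr do rewrite !mxE.
move: (enum_val j) (evB s) => y S; case: y => [j'|U] /=.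
  rewrite add0r; under eq_bigr do rewrite mulrC; by rewrite sum_delta.
under eq_bigr do rewrite mulrBr indM.
rewrite sumrB -mulr_suml sum_ind.
have -> : \sum_i ((i \in val S) && (i \in val U))%:R = #|val S :&: val U|%:R :> algC.
  by rewrite sum_ind; congr (_%:R); apply: eq_card => i; rewrite !inE.
rewrite disj_formula ?(eqP (valP S)) ?(eqP (valP U)) //.
have -> : (inr U == inr S :> T) = (sval U == sval S) by [].
rewrite divff ?pnatr_eq0 //; ring.
Qed.

Lemma card_Bt (P : pred {set 'I_k}) :
  #|[pred S : Bt | P (val S)]| = #|[pred S : {set 'I_k} | (#|S| == 2) && P S]|.
Proof.
rewrite -(card_imset _ val_inj); apply: eq_card => X; rewrite !inE.
apply/imsetP/idP => [[S PS ->]|/andP [X2 PX]].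
  by rewrite (valP S).
by exists (exist _ X X2).
Qed.

Lemma sum_Bt (P : pred {set 'I_k}) :
  \sum_(S : Bt) (P (val S))%:R =
   #|[pred S : {set 'I_k} | (#|S| == 2) && P S]|%:R :> algC.
Proof. by rewrite sum_ind -card_Bt. Qed.

Lemma card_compl2 (U : {set 'I_k}) : #|U| = 2%N -> #|~: U| = t.+1.
Proof. by move=> U2; have := cardsC U; rewrite U2 card_ord; lia. Qed.

Definition er (g : algC) (i : 'I_k) (y : T) : algC :=
  match y with inl j => (i == j)%:R | inr U => g * (i \in val U)%:R end.
Definition Embr g := mxW (er g).
Definition Cst : 'M[algC]_(k, 1) := const_mx 1.
Definition Zr (g : algC) := mxW (fun (_ : 'I_1) (y : T) =>
  match y with inl _ => 1 + g | inr _ => g * t%:R end).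

Lemma Embr_A (l g : algC) : g * (t.+1)%:R = l + 1 -> g * (l + t%:R) = 1 ->
  Embr g *m A = l *: Embr g + Cst *m Zr g.
Proof.
move=> h1 h2.
rewrite /Embr mxW_mulA; apply/matrixP => i j; rewrite !mxE big_ord1 !mxE.
move: (enum_val j) => y; rewrite sumW /=.
under eq_bigr do rewrite eq_sym.
rewrite sum_delta.
under eq_bigr do rewrite -mulrA.
rewrite -mulr_sumr.
case: y => [j'|U] /=.
  under eq_bigr do rewrite indM.
  rewrite (sum_Bt (fun S => (i \in S) && (j' \in S))) /= mul1r.
  case: (eqVneq i j') => [<-|ij].
    have -> : #|[pred S : {set 'I_k} | (#|S| == 2) && ((i \in S) && (i \in S))]| = t.+2.
      transitivity #|[pred S : {set 'I_k} | (#|S| == 2) && (i \in S)]|; first by apply: eq_card => S; rewrite !inE andbb.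
      by rewrite cardS_i card_ord.
    rewrite /= mulr0n mulr1n add0r mulr1.
    have -> : g * (t.+2)%:R = g * (t.+1)%:R + g by rewrite -addn1 natrD mulrDr mulr1.
    by rewrite h1; ring.
  have -> : #|[pred S : {set 'I_k} | (#|S| == 2) && ((i \in S) && (j' \in S))]| = 1%N.
    rewrite -[RHS](cardS_ij ij); apply: eq_card => S; by rewrite !inE andbA.
  by rewrite /= mulr0n mulr1n mulr0 mulr1; ring.
under eq_bigr do rewrite indM.
rewrite (sum_Bt (fun S => (i \in S) && [disjoint S & val U])) /= mul1r.
case: (boolP (i \in val U)) => iU.
  rewrite (@eq_card0 _ [pred S : {set 'I_k} | _]); last first.
    move=> S; rewrite !inE; apply/negP => /andP [_ /andP [iS dS]].
    by move: dS; rewrite disjoints_subset => /subsetP /(_ i iS); rewrite !inE iU.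
  by rewrite /= mulr1n mulr0 mulr1 addr0 -{1}h2; ring.
have -> : #|[pred S : {set 'I_k} | (#|S| == 2) && ((i \in S) && [disjoint S & sval U])]| = t.
  have := cardS_i_disj iU; rewrite /= => E.
  rewrite (@eq_card _ _ [pred S : {set 'I_k} | (#|S| == 2) && (i \in S) && [disjoint S & val U]]); last first.
    by move=> S; rewrite !inE andbA.
  rewrite E; have := cardsC (i |: val U); rewrite cardsU1 iU (eqP (valP U)) card_ord.
  move=> H; apply/eqP; rewrite -(eqn_add2l 3); apply/eqP; exact: H.
have -> : (false%:R : algC) = 0 by [].
by rewrite !mulr0 add0r.
Qed.

Definition es (b : algC) (y : T) : algC := match y with inl _ => 1 | inr _ => b end.
Definition vs b := mxW (fun (_ : 'I_1) => es b).

Lemma vs_A (s b : algC) : (1 + b) * (t.+2)%:R = s ->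
  2 + b * ('C(t.+1, 2))%:R = s * b -> vs b *m A = s *: vs b.
Proof.
move=> h1 h2.
rewrite /vs mxW_mulA; apply/matrixP => i j; rewrite !mxE.
move: (enum_val j) => y; rewrite sumW /=.
under eq_bigr do rewrite mul1r.
rewrite -mulr_sumr.
case: y => [j'|U] /=.
  rewrite sum_ind (sum_Bt (fun S => j' \in S)) mulr1.
  have -> : #|[pred i : 'I_k | i != j']| = t.+2.
    transitivity #|predC1 j'|; first by apply: eq_card.
    by rewrite cardC1 card_ord.
  have -> : #|[pred S : {set 'I_k} | (#|S| == 2) && (j' \in S)]| = t.+2.
    by rewrite cardS_i card_ord.
  by rewrite -h1; ring.
rewrite sum_ind (sum_Bt (fun S => [disjoint S & val U])).
have -> : #|[pred i : 'I_k | i \in sval U]| = 2%N.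
  by rewrite -[RHS](eqP (valP U)); apply: eq_card.
rewrite cardS_disj card_compl2 ?(eqP (valP U)) //.
Qed.

Lemma rfree_rinv p q (E : 'M[algC]_(p, q)) (Q : 'M_(q, p)) :
  E *m Q = 1%:M -> row_free E.
Proof.
move=> EQ; rewrite /row_free eqn_leq rank_leq_row /=.
by have := mxrankM_maxl E Q; rewrite EQ mxrank1.
Qed.

Lemma Emb1_free : row_free Emb1.
Proof.
pose Q : 'M[algC]_(#|T|, #|Bt|) := \matrix_(j, s) (enum_val j == inr (evB s))%:R.
apply: (@rfree_rinv _ _ _ Q); apply/matrixP => s s'; rewrite !mxE.
under eq_bigr do rewrite !mxE.
rewrite (sum_enumT (fun x => (x == inr (evB s))%:R * (x == inr (evB s'))%:R)).
rewrite sum_delta.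
have -> : (inr (evB s) == inr (evB s') :> T) = (evB s == evB s') by [].
by rewrite /evB (inj_eq enum_val_inj).
Qed.

Lemma Embr_free g : row_free (Embr g).
Proof.
pose Q : 'M[algC]_(#|T|, k) := \matrix_(j, i) (enum_val j == inl i)%:R.
apply: (@rfree_rinv _ _ _ Q); apply/matrixP => i i'; rewrite !mxE.
under eq_bigr do rewrite !mxE.
rewrite (sum_enumT (fun x => er g i x * (x == inl i')%:R)).
under eq_bigr do rewrite mulrC.
by rewrite sum_delta.
Qed.

Lemma rank_E1 : (#|Bt| - k <= \rank (eigenspace A 1))%N.
Proof.
have H : (kermx Nt *m Emb1 <= eigenspace A 1)%MS.
  apply/eigenspaceP.
  by rewrite -mulmxA Emb1_A mulmxDr mulmxA mulmx_ker mul0mx addr0 scale1r.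
apply: leq_trans (mxrankS H).
rewrite mxrankMfree ?Emb1_free // mxrank_ker leq_sub2l //.
exact: rank_leq_col.
Qed.

Lemma rank_Er (l : algC) : l ^+ 2 + (t.+1)%:R * l - 1 = 0 ->
  (t.+2 <= \rank (eigenspace A l))%N.
Proof.
move=> hl.
have nz : (t.+1)%:R != 0 :> algC by rewrite pnatr_eq0.
pose g := (l + 1) / (t.+1)%:R.
have h1 : g * (t.+1)%:R = l + 1 by rewrite /g divfK.
have h2 : g * (l + t%:R) = 1.
  apply: (mulIf nz); rewrite mul1r mulrAC h1.
  apply/eqP; rewrite -subr_eq0; apply/eqP.
  transitivity (l ^+ 2 + (t.+1)%:R * l - 1); last exact: hl.
  by rewrite -addn1 natrD; ring.
have H : (kermx Cst *m Embr g <= eigenspace A l)%MS.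
  apply/eigenspaceP.
  by rewrite -mulmxA (Embr_A h1 h2) mulmxDr mulmxA mulmx_ker mul0mx addr0 scalemxAr.
apply: leq_trans (mxrankS H).
rewrite mxrankMfree ?Embr_free // mxrank_ker.
have : (\rank Cst <= 1)%N by exact: rank_leq_col.
by lia.
Qed.

Lemma rank_Es (s : algC) :
  s ^+ 2 - ((t.+2)%:R + ('C(t.+1, 2))%:R) * s + (t.+2)%:R * (('C(t.+1, 2))%:R - 2) = 0 ->
  (1 <= \rank (eigenspace A s))%N.
Proof.
move=> hs.
set c := ('C(t.+1, 2))%:R : algC in hs *; set u := (t.+2)%:R : algC in hs *.
have nz : u != 0 by rewrite /u pnatr_eq0.
pose b := s / u - 1.
have bu : b * u = s - u by rewrite /b mulrBl divfK // mul1r.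
have h1 : (1 + b) * u = s by rewrite mulrDl mul1r bu; ring.
have h2 : 2 + b * c = s * b.
  apply: (mulIf nz).
  have -> : (2 + b * c) * u = 2 * u + (b * u) * c by ring.
  have -> : s * b * u = s * (b * u) by ring.
  rewrite bu; apply/eqP; rewrite -subr_eq0; apply/eqP.
  transitivity (- (s ^+ 2 - (u + c) * s + u * (c - 2))); first by ring.
  by rewrite hs oppr0.
have H : (vs b <= eigenspace A s)%MS by apply/eigenspaceP; exact: vs_A.
apply: leq_trans (mxrankS H).
rewrite lt0n mxrank_eq0; apply/eqP => H0.
have := congr1 (fun M : 'M_(1, #|T|) => M 0 (enum_rank (inl ord0 : T))) H0.
rewrite !mxE enum_rankK /= => /eqP; by rewrite oner_eq0.
Qed.

End W.

Lemma neg_prod (x y : algC) : x \is Num.real -> x * y = -1 ->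
  (x < 0 /\ 0 < y) \/ (0 < x /\ y < 0).
Proof.
move=> xr hxy.
have x0 : x != 0.
  apply/eqP => x0; move: hxy; rewrite x0 mul0r => /eqP.
  by rewrite eq_sym oppr_eq0 oner_eq0.
have h : x * y < 0 by rewrite hxy ltrN10.
move: xr; rewrite realE => /orP [xge|xle].
  have xp : 0 < x by rewrite lt_def x0.
  by right; split => //; rewrite -(pmulr_rlt0 _ xp).
have xn : x < 0 by rewrite lt_def eq_sym x0.
by left; split => //; rewrite -(nmulr_rlt0 _ xn).
Qed.

Lemma pos_pair (x y B P : algC) : x \is Num.real -> x * y = P -> x + y = B ->
  0 < P -> 0 < B -> 0 < x /\ 0 < y.
Proof.
move=> xr hp hb P0 B0.
have x0 : x != 0 by apply/eqP => x0; move: P0; rewrite -hp x0 mul0r ltxx.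
move: xr; rewrite realE => /orP [xge|xle].
  have xp : 0 < x by rewrite lt_def x0.
  by split => //; rewrite -(pmulr_rgt0 _ xp) hp.
have xn : x < 0 by rewrite lt_def eq_sym x0.
have yn : y < 0 by rewrite -(nmulr_rgt0 _ xn) hp.
have : x + y < 0 by rewrite -(addr0 0); apply: ltrD.
by rewrite hb => /(lt_trans B0); rewrite ltxx.
Qed.

Lemma N1 (t c : nat) : (2 <= t)%N -> (3 <= c)%N -> (1 + t.+2 * (c - 2) != t.+2 + c)%N.
Proof.
move=> ht; case: c => [|[|[|c]]] // _.
have -> : (c.+3 - 2 = c.+1)%N by lia.
apply/eqP; case: c => [|c]; nia.
Qed.

Lemma N2 (t c : nat) : (2 <= t)%N -> (3 <= c)%N ->
  ((1 + t.+2 * (c - 2)) ^ 2 + t.+1 * (t.+1 + (t.+2 + c)) * (1 + t.+2 * (c - 2))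
    != (t.+1 + (t.+2 + c)) ^ 2)%N.
Proof.
move=> ht; case: c => [|[|[|c]]] // _.
have -> : (c.+3 - 2 = c.+1)%N by lia.
set P := (t.+2 * c.+1)%N; set S := (t.+1 + (t.+2 + c.+3))%N.
have h1 : (S <= 2 * (1 + P))%N by rewrite /S /P; nia.
have h0 : (0 < S)%N by rewrite /S; lia.
have h2 : (S ^ 2 < t.+1 * S * (1 + P))%N.
  have h3 : (S * S <= S * (2 * (1 + P)))%N by rewrite leq_mul2l h1 orbT.
  have h4 : (S * (2 * (1 + P)) < t.+1 * S * (1 + P))%N.
    have h5 : (0 < S * (1 + P))%N by rewrite muln_gt0 h0.
    have -> : (t.+1 * S * (1 + P) = t.+1 * (S * (1 + P)))%N by rewrite mulnA.
    have -> : (S * (2 * (1 + P)) = 2 * (S * (1 + P)))%N by rewrite mulnCA.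
    by rewrite ltn_mul2r h5 /=; lia.
  by rewrite expnS expn1; exact: leq_ltn_trans h3 h4.
apply/eqP => E; move: h2; rewrite -E; lia.
Qed.

Lemma N3 (t c : nat) : (2 <= t)%N -> (3 <= c)%N ->
  ((t.+2 + c) ^ 2 != 4 * (t.+2 * (c - 2)))%N.
Proof.
move=> ht; case: c => [|[|[|c]]] // _.
have -> : (c.+3 - 2 = c.+1)%N by lia.
apply/eqP; set u := t.+2.
case: (leqP u c) => [/subnKC <-|/ltnW /subnKC <-]; nia.
Qed.

Lemma cardW k : #|Wvert k| = (k + #|({S : {set 'I_k} | #|S| == 2%N} : finType)|)%N.
Proof.
have := card_sum ('I_k) ({S : {set 'I_k} | #|S| == 2%N} : finType).
by rewrite card_ord.
Qed.

Lemma Nsum (t C : nat) : (2 * C = t.+3 * t.+2)%N ->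
  (C - t.+3 + (t.+2 + (t.+2 + (1 + (1 + 0)))))%N = (t.+3 + C)%N.
Proof. by move=> h; nia. Qed.

Section Main.
Variable t : nat.
Hypothesis ht : (2 <= t)%N.
Local Notation k := t.+3.
Variable c : nat.
Hypothesis c3 : (3 <= c)%N.
Hypothesis hcE : 'C(t.+1, 2) = c.
Let a : algC := (t.+1)%:R.
Let Bc : algC := (t.+2)%:R + c%:R.
Let Pc : algC := (t.+2)%:R * (c%:R - 2).
Let q1 (x : algC) := x ^+ 2 + a * x - 1.
Let q3 (x : algC) := x ^+ 2 - Bc * x + Pc.


Lemma PcE : Pc = (t.+2 * (c - 2))%:R.
Proof. by rewrite /Pc natrM natrB //; apply: leq_trans c3. Qed.
Lemma BcE : Bc = (t.+2 + c)%:R.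
Proof. by rewrite /Bc natrD. Qed.

Lemma q1_1 : q1 1 != 0.
Proof. by rewrite /q1 expr1n mulr1 addrC addKr /a pnatr_eq0. Qed.

Lemma q3_1 : q3 1 != 0.
Proof.
rewrite /q3 expr1n mulr1; apply/eqP => H.
have key : 1 + Pc = Bc.
  apply/eqP; rewrite -subr_eq0; apply/eqP; rewrite -H; ring.
rewrite BcE PcE nat1r in key; move/eqP: key; rewrite eqr_nat.
by apply/negP; apply: N1 ht c3.
Qed.

Lemma q13 x : q1 x = 0 -> q3 x = 0 -> False.
Proof.
rewrite /q1 /q3 => h1 h3.
have hx : (a + Bc) * x = 1 + Pc.
  apply/eqP; rewrite -subr_eq0; apply/eqP.
  transitivity ((x ^+ 2 + a * x - 1) - (x ^+ 2 - Bc * x + Pc)); first by ring.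
  by rewrite h1 h3 subrr.
have key : (1 + Pc) ^+ 2 + a * (a + Bc) * (1 + Pc) = (a + Bc) ^+ 2.
  rewrite -hx; apply/eqP; rewrite -subr_eq0; apply/eqP.
  transitivity ((a + Bc) ^+ 2 * (x ^+ 2 + a * x - 1)); first by ring.
  by rewrite h1 mulr0.
rewrite BcE PcE /a nat1r -!natrD -!natrM -!natrX -!natrD in key.
move/eqP: key; rewrite eqr_nat.
by apply/negP; apply: N2 ht c3.
Qed.

Let r1 : algC := (- a + sqrtC (a ^+ 2 + 4)) / 2.
Let r2 : algC := - a - r1.
Let s1 : algC := (Bc + sqrtC (Bc ^+ 2 - 4 * Pc)) / 2.
Let s2 : algC := Bc - s1.

Lemma q1r1 : q1 r1 = 0.
Proof.
rewrite /q1 /r1; set w := sqrtC _.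
have w2 : w ^+ 2 = a ^+ 2 + 4 by rewrite sqrtCK.
transitivity ((w ^+ 2 - (a ^+ 2 + 4)) / 4); first by field.
by rewrite w2 subrr mul0r.
Qed.

Lemma q1r2 : q1 r2 = 0.
Proof. rewrite -q1r1 /q1 /r2; ring. Qed.

Lemma r12 : r1 * r2 = -1.
Proof.
apply/eqP; rewrite -subr_eq0; apply/eqP; rewrite -oppr0 -q1r1 /q1 /r2; ring.
Qed.

Lemma q3s1 : q3 s1 = 0.
Proof.
rewrite /q3 /s1; set w := sqrtC _.
have w2 : w ^+ 2 = Bc ^+ 2 - 4 * Pc by rewrite sqrtCK.
transitivity ((w ^+ 2 - (Bc ^+ 2 - 4 * Pc)) / 4); first by field.
by rewrite w2 subrr mul0r.
Qed.

Lemma q3s2 : q3 s2 = 0.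
Proof. rewrite -q3s1 /q3 /s2; ring. Qed.

Lemma s12 : s1 * s2 = Pc.
Proof.
apply/eqP; rewrite -subr_eq0; apply/eqP; rewrite -oppr0 -q3s1 /q3 /s2; ring.
Qed.

Lemma s1s2 : s1 != s2.
Proof.
apply/eqP => E.
have key : Bc ^+ 2 = 4 * Pc.
  rewrite -s12 -E.
  have -> : Bc = s1 + s2 by rewrite /s2; ring.
  by rewrite -E; ring.
rewrite BcE PcE -natrX -natrM in key; move/eqP: key; rewrite eqr_nat.
by apply/negP; apply: N3 ht c3.
Qed.

Local Notation Bt := ({S : {set 'I_k} | #|S| == 2%N} : finType).
Local Notation A := (W_adjmx k).

Lemma main_sec : exists s : seq algC,
  char_poly A = \prod_(x <- s) ('X - x%:P) /\
  count (fun x : algC => x <= 0) s = t.+2.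
Proof.
have Er1 : (t.+2 <= \rank (eigenspace A r1))%N := rank_Er q1r1.
have Er2 : (t.+2 <= \rank (eigenspace A r2))%N := rank_Er q1r2.
have Es1 : (1 <= \rank (eigenspace A s1))%N.
  by apply: rank_Es; rewrite hcE; exact: q3s1.
have Es2 : (1 <= \rank (eigenspace A s2))%N.
  by apply: rank_Es; rewrite hcE; exact: q3s2.
have E1 : (#|Bt| - k <= \rank (eigenspace A 1))%N := rank_E1 t.
have Ah := A_herm t.
have rr1 : r1 \is Num.real by apply: (eig_real Ah); exact: leq_trans _ Er1.
have rs1 : s1 \is Num.real by apply: (eig_real Ah); exact: Es1.
have P0 : 0 < Pc.
  rewrite PcE ltr0n muln_gt0 /=; by lia.
have B0 : 0 < Bc by rewrite BcE ltr0n.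
have [s1p s2p] : 0 < s1 /\ 0 < s2.
  apply: (pos_pair (B := Bc) rs1 s12 _ P0 B0); rewrite /s2; ring.
have [rn [rp [rnn [rpp Hr]]]] : exists rn rp, rn < 0 /\ 0 < rp /\
   ((rn = r1 /\ rp = r2) \/ (rn = r2 /\ rp = r1)).
  case: (neg_prod rr1 r12) => [[h1 h2]|[h1 h2]].
    by exists r1, r2; do 2 split => //; left.
  by exists r2, r1; do 2 split => //; right.
have r1r2 : r1 != r2.
  by case: Hr => [[<- <-]|[<- <-]]; rewrite ?(lt_eqF (lt_trans rnn rpp)) ?(gt_eqF (lt_trans rnn rpp)).
have ne1q1 x : q1 x = 0 -> x != 1.
  by move=> h; apply/eqP => x1; move: h; rewrite x1; apply/eqP; exact: q1_1.
have ne1q3 x : q3 x = 0 -> x != 1.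
  by move=> h; apply/eqP => x1; move: h; rewrite x1; apply/eqP; exact: q3_1.
have neq13 x y : q1 x = 0 -> q3 y = 0 -> x != y.
  by move=> hx hy; apply/eqP => xy; apply: (q13 hx); rewrite xy.
have n11 : r1 != s1 := neq13 _ _ q1r1 q3s1.
have n12 : r1 != s2 := neq13 _ _ q1r1 q3s2.
have n21 : r2 != s1 := neq13 _ _ q1r2 q3s1.
have n22 : r2 != s2 := neq13 _ _ q1r2 q3s2.
have m11 : (s1 == r1) = false by rewrite eq_sym (negbTE n11).
have m12 : (s2 == r1) = false by rewrite eq_sym (negbTE n12).
have m21 : (s1 == r2) = false by rewrite eq_sym (negbTE n21).
have m22 : (s2 == r2) = false by rewrite eq_sym (negbTE n22).
have o1 : (r1 == 1) = false by apply/negbTE; exact: ne1q1 _ q1r1.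
have o2 : (r2 == 1) = false by apply/negbTE; exact: ne1q1 _ q1r2.
have o3 : (s1 == 1) = false by apply/negbTE; exact: ne1q3 _ q3s1.
have o4 : (s2 == 1) = false by apply/negbTE; exact: ne1q3 _ q3s2.
pose rs := [:: 1; r1; r2; s1; s2].
have urs : uniq rs.
  rewrite /rs /= !inE !negb_or !andbT.
  rewrite ![1 == _]eq_sym o1 o2 o3 o4 /=.
  by rewrite r1r2 n11 n12 n21 n22 s1s2.
pose L x := if x == 1 then (#|Bt| - k)%N else if (x == r1) || (x == r2) then t.+2 else 1%N.
have HL : forall r, r \in rs -> (L r <= \rank (eigenspace A r))%N.
  move=> r; rewrite !inE => /orP [/eqP ->|/orP [/eqP ->|/orP [/eqP ->|/orP [/eqP ->|/eqP ->]]]].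
  - by rewrite /L eqxx.
  - by rewrite /L o1 eqxx.
  - by rewrite /L o2 eqxx orbT.
  - by rewrite /L o3 m11 m21.
  - by rewrite /L o4 m12 m22.
have mB : #|Bt| = 'C(t.+3, 2).
  rewrite card_sig -[in RHS](card_ord t.+3) -card_draws.
  by apply: eq_card => S; rewrite !inE.
have Hsum : (\sum_(r <- rs) L r)%N = #|Wvert k|.
  rewrite /rs !big_cons big_nil /L eqxx o1 o2 o3 o4 m11 m12 m21 m22 !eqxx orbT /=.
  rewrite [RHS](cardW t.+3) mB.
  have := bin2_2 t.+3; move: ('C(t.+3, 2)) => C.
  rewrite -[(t.+3).-1]/(t.+2); exact: Nsum.
have [s [Hchar [Hin Hcnt]]] := spectral_count Ah urs HL Hsum.
exists s; split => //.
have Hpos : forall x, x \in rs -> x != rn -> 0 < x.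
  move=> x; rewrite !inE => /orP [/eqP ->|/orP [/eqP ->|/orP [/eqP ->|/orP [/eqP ->|/eqP ->]]]] => // xn.
  - by case: Hr xn => [[<- _]|[_ <-]] //; rewrite eqxx.
  - by case: Hr xn => [[_ <-]|[<- _]] //; rewrite eqxx.
rewrite (@eq_in_count _ _ (pred1 rn)); last first.
  move=> x xs; rewrite /=; case: (eqVneq x rn) => [->|xn]; first exact: ltW.
  exact: lt_geF (Hpos x (Hin x xs) xn).
have rnrs : rn \in rs by case: Hr => [[-> _]|[-> _]]; rewrite !inE eqxx ?orbT.
rewrite Hcnt // /L.
have -> : (rn == 1) = false by apply/negbTE; rewrite lt_eqF // (lt_trans rnn ltr01).
by case: Hr => [[-> _]|[-> _]]; rewrite eqxx ?orbT.
Qed.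

End Main.


Theorem mainTheorem11 (k : nat) (hk : (5 <= k)%N) :
  exists s : seq algC,
    char_poly (W_adjmx k) = \prod_(x <- s) ('X - x%:P) /\
    count (fun x : algC => x <= 0) s = k.-1.
Proof.
case: k hk => [|[|[|t]]] // hk.
have ht : (2 <= t)%N by [].
have c3 : (3 <= 'C(t.+1, 2))%N.
  have := bin2_2 t.+1; move: ('C(t.+1, 2)) => C.
  rewrite -[(t.+1).-1]/t => h; clear -h ht; nia.
exact: (main_sec ht c3 (erefl _)).
Qed.
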